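(* Let $N, M_1, M_2, P, R_1, R_2, R_3, \widetilde{M}_2, \widetilde{P}$ be positive integers with $\widetilde{M}_2 \le M_2$, $\widetilde{P}\le P$. Let $\mathbf{y}\in\mathbb{C}^N$, $\mathbf{H}\in\mathbb{C}^{N\times M_1}$ and $\mathcal{M}\in\mathbb{R}^{N\times M_2\times P}$ be as in the context. Let $\mathbf{U}_2\in\mathbb{R}^{M_2\times\widetilde{M}_2}$ and $\mathbf{U}_3\in\mathbb{R}^{P\times\widetilde{P}}$ have orthonormal columns, and set $\widetilde{\mathcal{M}}=\mathcal{M}\times_2\mathbf{U}_2^\top\times_3\mathbf{U}_3^\top$ and $\widehat{\mathcal{M}}=\mathcal{M}\times_2\mathbf{U}_2\mathbf{U}_2^\top\times_3\mathbf{U}_3\mathbf{U}_3^\top$. Suppose $(\mathcal{G}^\star,\mathbf{A}^\star,\mathbf{B}^\star,\mathbf{C}^\star)$, with $\mathcal{G}^\star\in\mathbb{C}^{R_1\times R_2\times R_3}$, $\mathbf{A}^\star\in\mathbb{C}^{M_1\times R_1}$, $\mathbf{B}^\star\in\mathbb{C}^{M_2\times R_2}$, $\mathbf{C}^\star\in\mathbb{C}^{P\times R_3}$, attains $$m_{\mathrm{Tu}}:=\min_{\mathcal{G},\mathbf{A},\mathbf{B},\mathbf{C}}\Big\|\mathbf{y}-\sum_{r_1=1}^{R_1}\sum_{r_2=1}^{R_2}\sum_{r_3=1}^{R_3}\mathcal{G}_{r_1r_2r_3}\, \mathbf{H}\mathbf{A}_{:r_1}\odot\big(\mathcal{M}\times_2\mathbf{B}_{:r_2}\times_3\mathbf{C}_{:r_3}\big)\Big\|_F$$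 over $\mathcal{G}\in\mathbb{C}^{R_1\times R_2\times R_3},\mathbf{A}\in\mathbb{C}^{M_1\times R_1},\mathbf{B}\in\mathbb{C}^{M_2\times R_2},\mathbf{C}\in\mathbb{C}^{P\times R_3}$. Then $$\inf_{\substack{\mathcal{G},\ \mathbf{A}\\ \widetilde{\mathbf{B}}\in\mathbb{C}^{\widetilde{M}_2\times R_2}\\ \widetilde{\mathbf{C}}\in\mathbb{C}^{\widetilde{P}\times R_3}}}\Big\|\mathbf{y}-\sum_{r_1,r_2,r_3}\mathcal{G}_{r_1r_2r_3}\, \mathbf{H}\mathbf{A}_{:r_1}\odot\big(\widetilde{\mathcal{M}}\times_2\widetilde{\mathbf{B}}_{:r_2}\times_3\widetilde{\mathbf{C}}_{:r_3}\big)\Big\|_F \le m_{\mathrm{Tu}}+\|\mathcal{M}-\widehat{\mathcal{M}}\|_F\sum_{r_1,r_2,r_3}|\mathcal{G}^\star_{r_1r_2r_3}|\,\|\mathbf{H}\mathbf{A}^\star_{:r_1}\|_\infty\|\mathbf{B}^\star_{:r_2}\|_F\|\mathbf{C}^\star_{:r_3}\|_F,$$ where $\mathcal{G}$ ranges over $\mathbb{C}^{R_1\times R_2\times R_3}$, $\mathbf{A}$ over $\mathbb{C}^{M_1\times R_1}$, and the sums are over $1\le r_k\le R_k$.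
   Context: Let $x(t)$, $t\in\mathbb{Z}$, be a complex-valued input signal and $y(t)$ a complex-valued output signal, $t_0\in\mathbb{Z}$. Define $\mathbf{y}=(y(t_0),\dots,y(t_0+N-1))^\top\in\mathbb{C}^N$; $\mathbf{H}\in\mathbb{C}^{N\times M_1}$ with entries $h_{ni}=x(t_0+n-i)$ ($n=0,\dots,N-1$, $i=0,\dots,M_1-1$); and $\mathcal{M}\in\mathbb{R}^{N\times M_2\times P}$ with entries $\mathcal{M}_{njp}=|x(t_0+n-j)|^p$ ($j=0,\dots,M_2-1$, $p=0,\dots,P-1$, with $0^0=1$). Mode-$k$ product of a tensor $\mathcal{X}\in\mathbb{C}^{I_1\times I_2\times I_3}$ with a matrix $\mathbf{Q}\in\mathbb{C}^{n\times I_k}$: replace mode $k$ by $n$ with $(\mathcal{X}\times_k\mathbf{Q})_{\dots j\dots}=\sum_{i_k}\mathcal{X}_{\dots i_k\dots}q_{j i_k}$ (no conjugation). Mode-$k$ product with a vector $\mathbf{v}\in\mathbb{C}^{I_k}$ contracts mode $k$: $(\mathcal{X}\times_k\mathbf{v})=\sum_{i_k}\mathcal{X}_{\dots i_k\dots}v_{i_k}$, removing that mode; in particular $(\mathcal{M}\times_2\mathbf{b}\times_3\mathbf{c})_n=\sum_{j,p}\mathcal{M}_{njp}b_jc_p$. $\mathbf{A}_{:r}$ denotes the $r$-th column of $\mathbf{A}$; $\odot$ is the entrywise (Hadamard) product; $\|\cdot\|_F$ is the Frobenius (Euclidean for vectors) norm; $\|\cdot\|_\infty$ is the maximum modulus of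 the entries of a vector. *)

(* Defs.v *)
From HB Require Import structures.
From mathcomp Require Import all_boot all_order all_algebra.
From mathcomp Require Import complex.
From mathcomp Require Import classical_sets reals.

Set Implicit Arguments.
Unset Strict Implicit.
Unset Printing Implicit Defensive.

Import Order.TTheory GRing.Theory Num.Theory.
Local Open Scope ring_scope.

Section Defs.
Variable R : realType.
Local Notation C := (complex R).

Definition cR (r : R) : C := Complex r 0.

Definition cmod (z : C) : R := let: Complex a b := z in Num.sqrt (a ^+ 2 + b ^+ 2).

Definition cfrob (n : nat) (v : 'I_n -> C) : R :=
  Num.sqrt (\sum_(i < n) cmod (v i) ^+ 2).

Definition cinfnorm (n : nat) (v : 'I_n -> C) : R :=
  \big[Num.max/0]_(i < n) cmod (v i).

Definition rfrob3 (a b c : nat) (T : 'I_a -> 'I_b -> 'I_c -> R) : R :=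
  Num.sqrt (\sum_(i < a) \sum_(j < b) \sum_(k < c) T i j k ^+ 2).

Definition yvec (y : int -> C) (t0 : int) (N : nat) : 'I_N -> C :=
  fun n => y (t0 + (n : nat)%:Z).

Definition Hmat (x : int -> C) (t0 : int) (N M1 : nat) : 'M[C]_(N, M1) :=
  \matrix_(n < N, i < M1) x (t0 + (n : nat)%:Z - (i : nat)%:Z).

(* M in R^{N x M2 x P}, M_{njp} = |x(t0 + n - j)|^p  (0^0 = 1) *)
Definition Mten (x : int -> C) (t0 : int) (N M2 P : nat) :
  'I_N -> 'I_M2 -> 'I_P -> R :=
  fun n j p => cmod (x (t0 + (n : nat)%:Z - (j : nat)%:Z)) ^+ (p : nat).

(* mode-2 and mode-3 products with matrices: T x_2 Q2 x_3 Q3,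
   (.)_{n j' p'} = sum_{j,p} T_{n j p} Q2_{j' j} Q3_{p' p} *)
Definition mode23 (a b c b' c' : nat) (T : 'I_a -> 'I_b -> 'I_c -> R)
  (Q2 : 'M[R]_(b', b)) (Q3 : 'M[R]_(c', c)) : 'I_a -> 'I_b' -> 'I_c' -> R :=
  fun n j' p' => \sum_(j < b) \sum_(p < c) T n j p * Q2 j' j * Q3 p' p.

Definition mode23v (a b c : nat) (T : 'I_a -> 'I_b -> 'I_c -> R)
  (v : 'I_b -> C) (w : 'I_c -> C) : 'I_a -> C :=
  fun n => \sum_(j < b) \sum_(p < c) cR (T n j p) * v j * w p.

Definition HAcol (N M1 R1 : nat) (H : 'M[C]_(N, M1)) (A : 'M[C]_(M1, R1))
  (r : 'I_R1) : 'I_N -> C :=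
  fun n => (H *m A) n r.

Definition model (N M1 b c R1 R2 R3 : nat) (H : 'M[C]_(N, M1))
  (T : 'I_N -> 'I_b -> 'I_c -> R)
  (G : 'I_R1 -> 'I_R2 -> 'I_R3 -> C) (A : 'M[C]_(M1, R1))
  (B : 'M[C]_(b, R2)) (Cm : 'M[C]_(c, R3)) : 'I_N -> C :=
  fun n => \sum_(r1 < R1) \sum_(r2 < R2) \sum_(r3 < R3)
     G r1 r2 r3 * HAcol H A r1 n
       * mode23v T (fun j => B j r2) (fun p => Cm p r3) n.

Definition objective (N M1 b c R1 R2 R3 : nat) (yv : 'I_N -> C)
  (H : 'M[C]_(N, M1)) (T : 'I_N -> 'I_b -> 'I_c -> R)
  (G : 'I_R1 -> 'I_R2 -> 'I_R3 -> C) (A : 'M[C]_(M1, R1))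
  (B : 'M[C]_(b, R2)) (Cm : 'M[C]_(c, R3)) : R :=
  cfrob (fun n => yv n - model H T G A B Cm n).

End Defs.

Arguments yvec {R} y t0 N _.
Arguments Hmat {R} x t0 N M1.
Arguments Mten {R} x t0 N M2 P _ _ _.

(* Main.v *)
Require Import Defs.
From HB Require Import structures.
From mathcomp Require Import all_boot all_order all_algebra.
From mathcomp Require Import complex.
From mathcomp Require Import classical_sets reals.
From mathcomp Require Import ring lra.
Import Order.TTheory GRing.Theory Num.Theory.
Local Open Scope ring_scope.
Local Open Scope complex_scope.

Section Aux.
Variable R : realType.
Local Notation C := (complex R).

Lemma cRE (r : R) : cR r = r%:C. Proof. by []. Qed.

Lemma cmodE (z : C) : (cmod z)%:C = `|z|.
Proof. by case: z => a b; rewrite normc_def. Qed.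

Lemma cRinj (a b : R) : a%:C = b%:C :> C -> a = b.
Proof. by case. Qed.

Lemma cmod_ge0 (z : C) : 0 <= cmod z.
Proof. by case: z => a b; exact: sqrtr_ge0. Qed.

Lemma cmodM (a b : C) : cmod (a * b) = cmod a * cmod b.
Proof. by apply: cRinj; rewrite rmorphM /= !cmodE normrM. Qed.

Lemma cmodD (a b : C) : cmod (a + b) <= cmod a + cmod b.
Proof. by rewrite -lecR rmorphD /= !cmodE ler_normD. Qed.

Lemma cmodN (a : C) : cmod (- a) = cmod a.
Proof. by apply: cRinj; rewrite !cmodE normrN. Qed.

Lemma cmodR (r : R) : cmod (cR r) = `|r|.
Proof. by apply: cRinj; rewrite cmodE cRE normc_def /= expr0n /= addr0 sqrtr_sqr. Qed.

Lemma cmod_sum (I : Type) (s : seq I) (F : I -> C) :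
  cmod (\sum_(i <- s) F i) <= \sum_(i <- s) cmod (F i).
Proof.
elim: s => [|a s IH]; first by rewrite !big_nil -lecR cmodE normr0.
rewrite !big_cons; apply: le_trans (cmodD _ _) _; exact: lerD.
Qed.

Lemma cmod0 : cmod (0 : C) = 0.
Proof. by have := cmodR 0; rewrite normr0. Qed.

Lemma CS2 n (a b : 'I_n -> R) :
  (\sum_i a i * b i) ^+ 2 <= (\sum_i a i ^+ 2) * (\sum_i b i ^+ 2).
Proof.
have e1 : \sum_i \sum_j a i ^+ 2 * b j ^+ 2 = (\sum_i a i ^+ 2) * (\sum_i b i ^+ 2).
  by rewrite big_distrlr.
have e2 : \sum_i \sum_j a j ^+ 2 * b i ^+ 2 = (\sum_i a i ^+ 2) * (\sum_i b i ^+ 2).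
  by rewrite exchange_big e1.
have e3 : \sum_i \sum_j a i * b i * (a j * b j) = (\sum_i a i * b i) ^+ 2.
  by rewrite expr2 big_distrlr.
have E : \sum_i \sum_j (a i * b j - a j * b i) ^+ 2 =
   2 * ((\sum_i a i ^+ 2) * (\sum_i b i ^+ 2) - (\sum_i a i * b i) ^+ 2).
  transitivity (\sum_i (\sum_j a i ^+ 2 * b j ^+ 2 + \sum_j a j ^+ 2 * b i ^+ 2
      - 2 * \sum_j a i * b i * (a j * b j))).
    apply: eq_bigr => i _; rewrite mulr_sumr -big_split -sumrB.
    by apply: eq_bigr => j _ /=; ring.
  by rewrite sumrB big_split /= -mulr_sumr e1 e2 e3; ring.
have : 0 <= \sum_i \sum_j (a i * b j - a j * b i) ^+ 2.
  by apply: sumr_ge0 => i _; apply: sumr_ge0 => j _; exact: sqr_ge0.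
rewrite E pmulr_rge0 ?ltr0n // subr_ge0 //.
Qed.

Lemma CS n (a b : 'I_n -> R) :
  \sum_i a i * b i <= Num.sqrt (\sum_i a i ^+ 2) * Num.sqrt (\sum_i b i ^+ 2).
Proof.
apply: le_trans (ler_norm _) _.
rewrite -sqrtr_sqr -sqrtrM; last by apply: sumr_ge0 => i _; exact: sqr_ge0.
exact/ler_wsqrtr/CS2.
Qed.

Lemma mink n (a b : 'I_n -> R) :
  Num.sqrt (\sum_i (a i + b i) ^+ 2) <=
  Num.sqrt (\sum_i a i ^+ 2) + Num.sqrt (\sum_i b i ^+ 2).
Proof.
have ha : 0 <= \sum_i a i ^+ 2 by apply: sumr_ge0 => i _; exact: sqr_ge0.
have hb : 0 <= \sum_i b i ^+ 2 by apply: sumr_ge0 => i _; exact: sqr_ge0.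
rewrite -[X in _ <= X]ger0_norm ?addr_ge0 ?sqrtr_ge0 // -sqrtr_sqr.
apply: ler_wsqrtr.
have -> : \sum_i (a i + b i) ^+ 2 =
   \sum_i a i ^+ 2 + 2 * \sum_i a i * b i + \sum_i b i ^+ 2.
  rewrite mulr_sumr -!big_split /=; apply: eq_bigr => i _; ring.
rewrite sqrrD !sqr_sqrtr // lerD2r lerD2l; have := @CS n a b; lra.
Qed.

Lemma eq_cfrob n (u v : 'I_n -> C) : (forall i, u i = v i) -> cfrob u = cfrob v.
Proof. by move=> e; rewrite /cfrob; congr Num.sqrt; apply: eq_bigr => i _; rewrite e. Qed.

Lemma cfrob_le n (v : 'I_n -> C) (w : 'I_n -> R) :
  (forall i, cmod (v i) <= w i) -> cfrob v <= Num.sqrt (\sum_i w i ^+ 2).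
Proof.
move=> h; apply: ler_wsqrtr; apply: ler_sum => i _.
rewrite !expr2; apply: ler_pM; rewrite ?cmod_ge0 //.
Qed.

Lemma cfrobD n (u v : 'I_n -> C) : cfrob (fun i => u i + v i) <= cfrob u + cfrob v.
Proof.
apply: le_trans (@cfrob_le n (fun i => u i + v i) (fun i => cmod (u i) + cmod (v i)) _) _.
  by move=> i; exact: cmodD.
exact: mink.
Qed.

Lemma cfrob_sum (I : Type) (s : seq I) n (F : I -> 'I_n -> C) :
  cfrob (fun k => \sum_(i <- s) F i k) <= \sum_(i <- s) cfrob (F i).
Proof.
elim: s => [|a s IH].
  rewrite big_nil (@eq_cfrob n _ (fun _ => 0)); last by move=> k; rewrite big_nil.
  rewrite /cfrob big1 ?sqrtr0 // => i _; by rewrite cmod0 expr0n.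
rewrite big_cons (@eq_cfrob n _ (fun k => F a k + \sum_(i <- s) F i k)); last first.
  by move=> k; rewrite big_cons.
apply: le_trans (@cfrobD n (F a) (fun k => \sum_(i <- s) F i k)) _; by rewrite lerD2l.
Qed.
End Aux.

Section Aux2.
Variable R : realType.
Local Notation C := (complex R).

Lemma mode23v_mode23 (a b c b' c' : nat) (T : 'I_a -> 'I_b -> 'I_c -> R)
  (Q2 : 'M[R]_(b', b)) (Q3 : 'M[R]_(c', c)) (v : 'I_b' -> C) (w : 'I_c' -> C) n :
  mode23v (mode23 T Q2 Q3) v w n =
  mode23v T (fun j => \sum_(j' < b') cR (Q2 j' j) * v j')
            (fun p => \sum_(p' < c') cR (Q3 p' p) * w p') n.
Proof.
rewrite /mode23v /mode23.
transitivity (\sum_(j' < b') \sum_(p' < c') \sum_(j < b) \sum_(p < c)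
   cR (T n j p) * (cR (Q2 j' j) * v j') * (cR (Q3 p' p) * w p')).
  apply: eq_bigr => j' _; apply: eq_bigr => p' _.
  rewrite !cRE rmorph_sum !mulr_suml; apply: eq_bigr => j _.
  rewrite rmorph_sum !mulr_suml; apply: eq_bigr => p _.
  rewrite !rmorphM /= !cRE; ring.
symmetry.
transitivity (\sum_(j < b) \sum_(p < c) \sum_(j' < b') \sum_(p' < c')
   cR (T n j p) * (cR (Q2 j' j) * v j') * (cR (Q3 p' p) * w p')).
  apply: eq_bigr => j _; apply: eq_bigr => p _.
  rewrite [cR _ * _]mulr_sumr mulr_suml; apply: eq_bigr => j' _.
  by rewrite mulr_sumr.
under eq_bigr do rewrite exchange_big /=.
rewrite exchange_big /=; apply: eq_bigr => j' _.
under eq_bigr do rewrite exchange_big /=.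
by rewrite exchange_big.
Qed.

Lemma eq_mode23v (a b c : nat) (T : 'I_a -> 'I_b -> 'I_c -> R) v v' w w' n :
  (forall j, v j = v' j) -> (forall p, w p = w' p) ->
  mode23v T v w n = mode23v T v' w' n.
Proof.
move=> ev ew; rewrite /mode23v; apply: eq_bigr => j _; apply: eq_bigr => p _.
by rewrite ev ew.
Qed.

Lemma proj_vec (m k : nat) (U : 'M[R]_(m, k)) (v : 'I_m -> C) (j : 'I_m) :
  \sum_(j' < k) cR (U^T j' j) * (\sum_(j1 < m) cR (U j1 j') * v j1) =
  \sum_(j1 < m) cR ((U *m U^T) j1 j) * v j1.
Proof.
transitivity (\sum_(j' < k) \sum_(j1 < m) cR (U j j') * cR (U j1 j') * v j1).
  apply: eq_bigr => j' _; rewrite mulr_sumr; apply: eq_bigr => j1 _.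
  by rewrite mxE mulrA.
rewrite exchange_big /=; apply: eq_bigr => j1 _.
rewrite !mxE cRE rmorph_sum mulr_suml; apply: eq_bigr => j' _.
by rewrite mxE rmorphM /= !cRE [((U j j')%:C) * _]mulrC.
Qed.

Lemma mode23v_sub (a b c : nat) (T1 T2 : 'I_a -> 'I_b -> 'I_c -> R) v w n :
  mode23v T1 v w n - mode23v T2 v w n =
  mode23v (fun n j p => T1 n j p - T2 n j p) v w n.
Proof.
rewrite /mode23v -sumrB; apply: eq_bigr => j _; rewrite -sumrB.
apply: eq_bigr => p _; rewrite !cRE rmorphB /=; ring.
Qed.

Lemma cmod_mode23v (a b c : nat) (E : 'I_a -> 'I_b -> 'I_c -> R) v w n :
  cmod (mode23v E v w n) <=
  Num.sqrt (\sum_(j < b) \sum_(p < c) E n j p ^+ 2) * cfrob v * cfrob w.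
Proof.
rewrite /mode23v.
apply: le_trans (cmod_sum _ _ _ _) _.
apply: (@le_trans _ _ (\sum_(j < b) cmod (v j) *
   (Num.sqrt (\sum_(p < c) E n j p ^+ 2) * cfrob w))) _.
  apply: ler_sum => j _; apply: le_trans (cmod_sum _ _ _ _) _.
  apply: (@le_trans _ _ (cmod (v j) * \sum_(p < c) `|E n j p| * cmod (w p))) _.
    rewrite mulr_sumr; apply: ler_sum => p _.
    by rewrite !cmodM cmodR le_eqVlt; apply/orP; left; apply/eqP; ring.
  apply: ler_wpM2l; first exact: cmod_ge0.
  apply: le_trans (CS _ _ _ _) _.
  rewrite /cfrob; apply: ler_wpM2r; first exact: sqrtr_ge0.
  by rewrite le_eqVlt; apply/orP; left; apply/eqP; congr Num.sqrt;
     apply: eq_bigr => p _; rewrite real_normK ?num_real.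
under eq_bigr do rewrite mulrA.
rewrite -mulr_suml [Num.sqrt _ * cfrob v]mulrC.
apply: ler_wpM2r; first by rewrite /cfrob sqrtr_ge0.
apply: le_trans (CS _ _ _ _) _.
rewrite /cfrob ler_wpM2l ?sqrtr_ge0 //.
rewrite le_eqVlt; apply/orP; left; apply/eqP; congr Num.sqrt.
apply: eq_bigr => j _; rewrite sqr_sqrtr //.
by apply: sumr_ge0 => p _; exact: sqr_ge0.
Qed.

Lemma cinfnorm_ge0 n (v : 'I_n -> C) : 0 <= cinfnorm v.
Proof.
rewrite /cinfnorm; elim/big_ind: _ => //.
  by move=> x y hx _; rewrite le_max hx.
by move=> i _; exact: cmod_ge0.
Qed.

Lemma cinfnorm_ge n (v : 'I_n -> C) i : cmod (v i) <= cinfnorm v.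
Proof. by rewrite /cinfnorm; apply: le_bigmax. Qed.
End Aux2.

Local Close Scope complex_scope.
Local Open Scope classical_set_scope.

Theorem theorem3 (R : realType) (x y : int -> complex R) (t0 : int)
  (N M1 M2 P R1 R2 R3 M2t Pt : nat)
  (hN : (0 < N)%N) (hM1 : (0 < M1)%N) (hM2 : (0 < M2)%N) (hP : (0 < P)%N)
  (hR1 : (0 < R1)%N) (hR2 : (0 < R2)%N) (hR3 : (0 < R3)%N)
  (hM2t : (0 < M2t)%N) (hPt : (0 < Pt)%N)
  (hM2tle : (M2t <= M2)%N) (hPtle : (Pt <= P)%N)
  (U2 : 'M[R]_(M2, M2t)) (U3 : 'M[R]_(P, Pt))
  (hU2 : U2^T *m U2 = 1%:M) (hU3 : U3^T *m U3 = 1%:M)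
  (Gs : 'I_R1 -> 'I_R2 -> 'I_R3 -> complex R) (As : 'M[complex R]_(M1, R1))
  (Bs : 'M[complex R]_(M2, R2)) (Cs : 'M[complex R]_(P, R3))
  (hmin : forall (G : 'I_R1 -> 'I_R2 -> 'I_R3 -> complex R)
            (A : 'M[complex R]_(M1, R1)) (B : 'M[complex R]_(M2, R2))
            (Cm : 'M[complex R]_(P, R3)),
      objective (yvec y t0 N) (Hmat x t0 N M1) (Mten x t0 N M2 P) Gs As Bs Cs
      <= objective (yvec y t0 N) (Hmat x t0 N M1) (Mten x t0 N M2 P) G A B Cm) :
  let yv := yvec y t0 N in
  let H := Hmat x t0 N M1 in
  let M := Mten x t0 N M2 P in
  let Mt := mode23 M U2^T U3^T in
  let Mh := mode23 M (U2 *m U2^T) (U3 *m U3^T) in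
  let mTu := objective yv H M Gs As Bs Cs in
  inf [set v : R | exists (G : 'I_R1 -> 'I_R2 -> 'I_R3 -> complex R)
          (A : 'M[complex R]_(M1, R1)) (Bt : 'M[complex R]_(M2t, R2))
          (Ct : 'M[complex R]_(Pt, R3)),
          v = objective yv H Mt G A Bt Ct]
  <= mTu + rfrob3 (fun n j p => M n j p - Mh n j p)
       * \sum_(r1 < R1) \sum_(r2 < R2) \sum_(r3 < R3)
           cmod (Gs r1 r2 r3) * cinfnorm (HAcol H As r1)
           * cfrob (fun j => Bs j r2) * cfrob (fun p => Cs p r3).
Proof.
cbv zeta.
set yv := yvec y t0 N. set H := Hmat x t0 N M1. set M := Mten x t0 N M2 P.
set Mt := mode23 M U2^T U3^T. set Mh := mode23 M (U2 *m U2^T) (U3 *m U3^T).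
set mTu := objective yv H M Gs As Bs Cs.
pose Bt : 'M[complex R]_(M2t, R2) :=
  \matrix_(j', r) \sum_(j1 < M2) cR (U2 j1 j') * Bs j1 r.
pose Ct : 'M[complex R]_(Pt, R3) :=
  \matrix_(p', r) \sum_(p1 < P) cR (U3 p1 p') * Cs p1 r.
set S := [set v : R | _].
have hlb : has_lbound S.
  exists 0 => v [G [A [B [Cm ->]]]]; exact: sqrtr_ge0.
have hin : S (objective yv H Mt Gs As Bt Ct) by exists Gs, As, Bt, Ct.
apply: le_trans (ge_inf hlb hin) _.
have emodel : forall n, model H Mt Gs As Bt Ct n = model H Mh Gs As Bs Cs n.
  move=> n; rewrite /model; apply: eq_bigr => r1 _; apply: eq_bigr => r2 _.
  apply: eq_bigr => r3 _; congr (_ * _).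
  rewrite !mode23v_mode23; apply: eq_mode23v => j.
    rewrite -(proj_vec _ _ _ U2 (fun j1 => Bs j1 r2) j).
    by apply: eq_bigr => j' _; rewrite /Bt !mxE.
  rewrite -(proj_vec _ _ _ U3 (fun p1 => Cs p1 r3) j).
  by apply: eq_bigr => p' _; rewrite /Ct !mxE.
set E := (fun n j p => M n j p - Mh n j p).
have e1 : forall n, yv n - model H Mt Gs As Bt Ct n =
   (yv n - model H M Gs As Bs Cs n) + (model H M Gs As Bs Cs n - model H Mh Gs As Bs Cs n).
  by move=> n; rewrite emodel addrA subrK.
rewrite /objective (eq_cfrob _ _ _ _ e1).
apply: le_trans (cfrobD _ _ _ _) _; rewrite lerD2l.
have e2 : forall n, model H M Gs As Bs Cs n - model H Mh Gs As Bs Cs n =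
  \sum_(r1 < R1) \sum_(r2 < R2) \sum_(r3 < R3) Gs r1 r2 r3 * HAcol H As r1 n
      * mode23v E (fun j => Bs j r2) (fun p => Cs p r3) n.
  move=> n; rewrite /model -sumrB; apply: eq_bigr => r1 _.
  rewrite -sumrB; apply: eq_bigr => r2 _.
  rewrite -sumrB; apply: eq_bigr => r3 _.
  by rewrite -mulrBr mode23v_sub.
rewrite (eq_cfrob _ _ _ _ e2).
apply: le_trans (cfrob_sum _ _ _ _ _) _; rewrite mulr_sumr; apply: ler_sum => r1 _.
apply: le_trans (cfrob_sum _ _ _ _ _) _; rewrite mulr_sumr; apply: ler_sum => r2 _.
apply: le_trans (cfrob_sum _ _ _ _ _) _; rewrite mulr_sumr; apply: ler_sum => r3 _.
set K := _ * _ * _ * _.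
have K0 : 0 <= K by rewrite /K !mulr_ge0 ?cmod_ge0 ?cinfnorm_ge0 ?sqrtr_ge0.
apply: le_trans (cfrob_le _ _ _
  (fun n => K * Num.sqrt (\sum_(j < M2) \sum_(p < P) E n j p ^+ 2)) _) _.
  move=> n; rewrite !cmodM.
  apply: (@le_trans _ _ (cmod (Gs r1 r2 r3) * cinfnorm (HAcol H As r1) *
     (Num.sqrt (\sum_(j < M2) \sum_(p < P) E n j p ^+ 2) *
      cfrob (fun j => Bs j r2) * cfrob (fun p => Cs p r3)))).
    apply: ler_pM; rewrite ?mulr_ge0 ?cmod_ge0 //.
      by apply: ler_pM; rewrite ?cmod_ge0 ?lexx ?cinfnorm_ge.
    exact: cmod_mode23v.
  by rewrite /K le_eqVlt; apply/orP; left; apply/eqP; ring.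
rewrite le_eqVlt; apply/orP; left; apply/eqP.
have e3 : \sum_(n < N) (K * Num.sqrt (\sum_(j < M2) \sum_(p < P) E n j p ^+ 2)) ^+ 2
   = K ^+ 2 * \sum_(n < N) \sum_(j < M2) \sum_(p < P) E n j p ^+ 2.
  rewrite mulr_sumr; apply: eq_bigr => n _; rewrite exprMn sqr_sqrtr //.
  by apply: sumr_ge0 => j _; apply: sumr_ge0 => p _; exact: sqr_ge0.
by rewrite e3 sqrtrM ?sqr_ge0 // sqrtr_sqr ger0_norm // /rfrob3 mulrC.
Qed.
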